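(* Let $K$ be a global function field, $\ell$ a rational prime coprime to the characteristic of $K$, and suppose a primitive $\ell$-th root of unity $\zeta_\ell$ lies in $K$. Let $x,d,a\in K^*$ with $dx^\ell+d^\ell\neq0$ and $a+a^{-1}\neq0$, and let $H=K\left(\sqrt[\ell]{1+d^{-1}},\sqrt[\ell]{1+(dx^\ell+d^\ell)^{-1}},\sqrt[\ell]{1+(a+a^{-1})d^{-1}}\right)$. Let $\mathfrak{p}$ be a prime of $K$ such that (i) $v_\mathfrak{p}(d)<0$; (ii) $v_\mathfrak{p}(dx^\ell)<v_\mathfrak{p}(d^\ell)$; (iii) $v_\mathfrak{p}(a)=0$ and the residue of $a$ at $\mathfrak{p}$ is not an $\ell$-th power in $\mathbb{F}_\mathfrak{p}^\times$; (iv) $v_\mathfrak{p}(d)\not\equiv0\pmod\ell$. Then for every prime $\mathfrak{q}$ of $H$ above $\mathfrak{p}$ we have $v_\mathfrak{q}(dx^\ell+d^\ell)\not\equiv0\pmod\ell$ and the residue of $a$ at $\mathfrak{q}$ is not an $\ell$-th power in $\mathbb{F}_\mathfrak{q}^\times$.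
   Context: For a prime $\mathfrak{p}$ of a global function field, $v_\mathfrak{p}$ denotes the normalized discrete valuation and $\mathbb{F}_\mathfrak{p}$ the residue field. *)

(* Defs.v *)
From HB Require Import structures.
From mathcomp Require Import all_boot all_order all_algebra all_field.
From mathcomp Require Import fraction.
Set Implicit Arguments. Unset Strict Implicit. Unset Printing Implicit Defensive.
Import Order.TTheory GRing.Theory Num.Theory.
Local Open Scope ring_scope.

(* The rational function field F(t) over a finite field F. A global function
   field is a finite extension K : fieldExtType (ratfun F). *)
Definition ratfun (F : finFieldType) := {fraction {poly F}}.

(* v is a normalized discrete valuation of K (a prime of K): on K^*,
   v(xy) = v x + v y, v(x+y) >= min (v x) (v y), and v is onto Z (it takes
   the value 1).  The value of v at 0 is irrelevant and never used. *)
Definition is_prime_val (K : fieldType) (v : K -> int) : Prop :=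
  [/\ (forall x y : K, x != 0 -> y != 0 -> v (x * y) = v x + v y),
      (forall x y : K, x != 0 -> y != 0 -> x + y != 0 ->
          (v x <= v (x + y)) || (v y <= v (x + y)))
    & (exists x : K, x != 0 /\ v x = 1)].

(* The residue of a (a unit at v) is an l-th power in the multiplicative
   group of the residue field: there is a unit y with y^l = a mod the
   maximal ideal. *)
Definition residue_lth_power (K : fieldType) (v : K -> int) (l : nat) (a : K)
  : Prop :=
  exists y : K, [/\ y != 0, v y = 0 & (a - y ^+ l == 0) || (0 < v (a - y ^+ l))].

(* The prime w of the extension L/K lies above the prime v of K:
   w restricted to K is e * v for some ramification index e >= 1. *)
Definition lies_above (K : fieldType) (L : fieldExtType K)
  (w : L -> int) (v : K -> int) : Prop :=
  exists e : nat, (0 < e)%N /\ forall x : K, x != 0 -> w (x%:A) = (e%:Z) * v x.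

(* Main.v *)
Require Import Defs.
From HB Require Import structures.
From mathcomp Require Import all_boot all_order all_algebra all_field.
From mathcomp Require Import fraction.
From mathcomp Require Import zify ring.
Import Order.TTheory GRing.Theory Num.Theory.
Local Open Scope ring_scope.
Set Implicit Arguments. Unset Strict Implicit. Unset Printing Implicit Defensive.

Section Val.
Variables (L : fieldType) (v : L -> int) (hv : is_prime_val v).

Implicit Types x y : L.
Definition gev (x : L) (N : int) := (x == 0) || (N <= v x).

Lemma vM x y : x != 0 -> y != 0 -> v (x * y) = v x + v y.
Proof. by case: hv => h _ _; apply: h. Qed.

Lemma v1 : v 1 = 0.
Proof. have := vM (oner_neq0 L) (oner_neq0 L); rewrite mulr1 => h.
by move/(congr1 (fun z => z - v 1)): h; rewrite subrr addrK => <-. Qed.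

Lemma vX x n : x != 0 -> v (x ^+ n) = (n%:Z) * v x.
Proof.
move=> x0; elim: n => [|n IH]; first by rewrite expr0 v1 mul0r.
by rewrite exprS vM ?expf_neq0 // IH -[n.+1]addn1 PoszD mulrDl mul1r addrC.
Qed.

Lemma vN1 : v (-1) = 0.
Proof.
have N1 : (-1 : L) != 0 by rewrite oppr_eq0 oner_neq0.
have h := vM N1 N1.
rewrite mulrNN mulr1 v1 in h. (timeout 20 lia).
Qed.

Lemma vN x : v (- x) = v x.
Proof.
have [->|x0] := eqVneq x 0; first by rewrite oppr0.
by rewrite -mulN1r vM ?vN1 ?add0r // oppr_eq0 oner_neq0.
Qed.

Lemma vV x : x != 0 -> v x^-1 = - v x.
Proof.
move=> x0; have := vM x0 (invr_neq0 x0); rewrite mulfV // v1 => h. (timeout 20 lia).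
Qed.

Lemma ge_add x y N : gev x N -> gev y N -> gev (x + y) N.
Proof.
rewrite /gev; have [->|x0] := eqVneq x 0; first by rewrite add0r => _.
have [->|y0] := eqVneq y 0; first by rewrite addr0 /= => ->; rewrite orbT.
have [xy|xy0] := eqVneq (x + y) 0; first by rewrite xy.
move=> /= h1 h2; case: hv => _ hu _; have := hu x y x0 y0 xy0.
case/orP => h; [exact: le_trans h | exact: le_trans h].
Qed.

Lemma ge_opp x N : gev x N -> gev (- x) N.
Proof. by rewrite /gev oppr_eq0 vN. Qed.

Lemma ge_sub x y N : gev x N -> gev y N -> gev (x - y) N.
Proof. by move=> h1 h2; apply: ge_add => //; apply: ge_opp. Qed.

Lemma ge_mul x y M N : gev x M -> gev y N -> gev (x * y) (M + N).
Proof.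
rewrite /gev mulf_eq0; have [->|x0] //= := eqVneq x 0.
have [->|y0] //= := eqVneq y 0; rewrite vM // => h1 h2; exact: lerD.
Qed.

Lemma ge_le x M N : M <= N -> gev x N -> gev x M.
Proof. rewrite /gev => h /orP [->//|h2]; by rewrite (le_trans h h2) orbT. Qed.

Lemma ge0 N : gev 0 N. Proof. by rewrite /gev eqxx. Qed.

Lemma ge_self x : gev x (v x). Proof. by rewrite /gev lexx orbT. Qed.

Lemma ge1 : gev 1 0. Proof. by rewrite /gev v1 lexx orbT. Qed.

Lemma ge_nat n : gev n%:R 0.
Proof.
elim: n => [|n IH]; first by rewrite ge0.
by rewrite -addn1 natrD; apply: ge_add => //; apply: ge1.
Qed.

Lemma ge_exp x n : gev x 0 -> gev (x ^+ n) 0.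
Proof.
move=> h; elim: n => [|n IH]; first by rewrite expr0 ge1.
by rewrite exprS -(addr0 0); apply: ge_mul.
Qed.

Lemma ge_sum (I : Type) (r : seq I) (P : pred I) (F : I -> L) N :
  (forall i, P i -> gev (F i) N) -> gev (\sum_(i <- r | P i) F i) N.
Proof.
move=> h; elim/big_rec: _ => [|i x Pi hx]; first exact: ge0.
by apply: ge_add => //; apply: h.
Qed.

Lemma strict x y : x != 0 -> gev y (v x + 1) -> x + y != 0 /\ v (x + y) = v x.
Proof.
move=> x0 hy.
have hy' : gev y (v x) by apply: ge_le hy; (timeout 20 lia).
have xy0 : x + y != 0.
  apply/eqP => e; have ey : y = - x by apply/eqP; rewrite -subr_eq0 opprK addrC e.
  move: hy; rewrite /gev ey oppr_eq0 (negPf x0) vN /=; (timeout 20 lia).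
split => //.
have h1 : gev (x + y) (v x) by apply: ge_add => //; apply: ge_self.
have h2 : ~ v x < v (x + y).
  move=> hlt.
  have : gev (x + y - y) (v x + 1).
    apply: ge_sub => //; rewrite /gev (negPf xy0) /=; (timeout 20 lia).
  rewrite addrK /gev (negPf x0) /=; (timeout 20 lia).
move: h1; rewrite /gev (negPf xy0) /= => h1; (timeout 20 lia).
Qed.

Lemma gevI x N : N <= v x -> gev x N.
Proof. by rewrite /gev => ->; rewrite orbT. Qed.

Lemma ge_v x N : x != 0 -> gev x N -> N <= v x.
Proof. by rewrite /gev => /negPf ->. Qed.

Lemma ge_inv y : y != 0 -> v y = 0 -> gev (y^-1) 0.
Proof. by move=> y0 hy; rewrite /gev vV // hy oppr0 lexx orbT. Qed.

Lemma vfin x n : x != 0 -> (1 < n)%N -> x ^+ n = x -> v x = 0.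
Proof.
move=> x0 hn e; have := vX n x0; rewrite e => h.
have : ((n%:Z) - 1) * v x = 0 by rewrite mulrBl mul1r -h subrr.
move/eqP; rewrite mulf_eq0 => /orP [|/eqP //]. rewrite subr_eq0 => /eqP; (timeout 20 lia).
Qed.

End Val.

Section Newton.
Variables (K : fieldType) (v : K -> int) (hv : is_prime_val v).
Variables (l : nat) (hl0 : (l%:R : K) != 0) (hvl : v l%:R = 0).
Implicit Types c s t u : K.

Lemma binom_exp t : gev v t 0 -> forall n : nat,
  exists R, gev v R 0 /\ (1 + t) ^+ n = 1 + n%:R * t + t ^+ 2 * R.
Proof.
move=> ht; elim => [|n [R [hR e]]].
  by exists 0; rewrite /gev eqxx; split => //; rewrite expr0 mul0r mulr0 !addr0.
exists (n%:R + R + t * R); split.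
  apply: ge_add => //; first (apply: ge_add => //; exact: ge_nat).
  by rewrite -(addr0 0); apply: ge_mul.
rewrite exprS e mulrSr. ring.
Qed.

Lemma newton u : gev v (u - 1) 1 -> forall n : nat,
  exists c s, [/\ c != 0, v c = 0, u = c ^+ l * (1 + s) & gev v s (n%:Z + 1)].
Proof.
move=> hu; elim => [|n [c [s [c0 vc eu hs]]]].
  exists 1, (u - 1); split => //; [exact: oner_neq0 | exact: v1 | ].
  by rewrite expr1n mul1r addrC subrK.
have [s0|s0] := eqVneq s 0.
  exists c, s; split => //; rewrite s0 /gev eqxx //.
have m1 : n%:Z + 1 <= v s by move: hs; rewrite /gev (negPf s0).
set t := s / l%:R.
have t0 : t != 0 by rewrite mulf_neq0 // invr_eq0.
have vt : v t = v s by rewrite /t vM // ?invr_eq0 // vV // hvl oppr0 addr0.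
have gt0 : gev v t 0 by apply: gevI; rewrite vt; (timeout 20 lia).
have [R [hR eR]] := binom_exp gt0 l.
have [t1 vt1] : 1 + t != 0 /\ v (1 + t) = v 1.
  apply: strict => //; first exact: oner_neq0.
  by apply: gevI; rewrite (v1 hv) vt; (timeout 20 lia).
rewrite (v1 hv) in vt1.
set P := (1 + t) ^+ l.
have P0 : P != 0 by rewrite expf_neq0.
have vP : v P = 0 by rewrite vX // vt1 mulr0.
exists (c * (1 + t)), (- (t ^+ 2 * R) / P); split.
- by rewrite mulf_neq0.
- by rewrite vM // vc vt1 addr0.
- have es : s = l%:R * t by rewrite /t mulrC divfK.
  rewrite eu exprMn -/P es.
  have -> : P = 1 + l%:R * t + t ^+ 2 * R by [].
  field. by rewrite -eR.
- have gt : gev v t (v s) by apply: gevI; rewrite vt.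
  have H : gev v (- (t ^+ 2 * R) / P) ((v s + v s) + 0 + 0).
    apply: ge_mul => //; last exact: ge_inv.
    apply: ge_opp => //; apply: ge_mul => //.
    by rewrite expr2; apply: ge_mul.
  by apply: ge_le H; (timeout 20 lia).
Qed.
End Newton.

Section Ext.
Variables (K : fieldType) (H : fieldExtType K).
Variables (vp : K -> int) (hvp : is_prime_val vp) (wq : H -> int) (hwq : is_prime_val wq).
Variables (e : nat) (he : (0 < e)%N) (hwe : forall c : K, c != 0 -> wq c%:A = e%:Z * vp c).

Lemma alg_eq0 (c : K) : (c%:A == 0 :> H) = (c == 0).
Proof. by rewrite scaler_eq0 oner_eq0 orbF. Qed.

Lemma gevA (c : K) N : 0 <= N -> gev vp c N -> gev wq c%:A N.
Proof.
move=> N0; rewrite /gev alg_eq0; have [//|c0] := eqVneq c 0.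
rewrite /= hwe // => h.
have : vp c <= e%:Z * vp c by apply: ler_peMl; (timeout 20 lia).
(timeout 20 lia).
Qed.

Definition S (h : H) := forall N : int, exists c : K, gev wq (h - c%:A) N.

Lemma S_alg c : S c%:A.
Proof. by move=> N; exists c; rewrite subrr ge0. Qed.

Lemma S_add h1 h2 : S h1 -> S h2 -> S (h1 + h2).
Proof.
move=> s1 s2 N; have [c1 e1] := s1 N; have [c2 e2] := s2 N.
exists (c1 + c2); have -> : h1 + h2 - (c1 + c2)%:A = (h1 - c1%:A) + (h2 - c2%:A).
  by rewrite scalerDl; ring.
exact: ge_add.
Qed.

Lemma S_mul h1 h2 : S h1 -> S h2 -> S (h1 * h2).
Proof.
move=> s1 s2 N.
have [->|h10] := eqVneq h1 0; first by rewrite mul0r -(scale0r (1 : H)); apply: S_alg.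
have [->|h20] := eqVneq h2 0; first by rewrite mulr0 -(scale0r (1 : H)); apply: S_alg.
set A := wq h1.
have [c2 e2] := s2 (N - A).
set B := - (`|wq h2| + `|N - A|)%:Z.
have gc2 : gev wq c2%:A B.
  have -> : c2%:A = h2 - (h2 - c2%:A) by ring.
  apply: ge_sub => //; [apply: gevI; rewrite /B; lia | apply: ge_le e2; rewrite /B; lia].
have [c1 e1] := s1 (N - B).
exists (c1 * c2).
have -> : h1 * h2 - (c1 * c2)%:A = h1 * (h2 - c2%:A) + (h1 - c1%:A) * c2%:A.
  have -> : (c1 * c2)%:A = c1%:A * c2%:A :> H by rewrite -scalerAl mul1r scalerA.
  ring.
apply: ge_add => //.
  have -> : N = A + (N - A) by ring.
  by apply: ge_mul => //; apply: ge_self.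
have -> : N = (N - B) + B by ring.
exact: ge_mul.
Qed.

Lemma S_sum (I : Type) (r : seq I) (P : pred I) (F : I -> H) :
  (forall i, P i -> S (F i)) -> S (\sum_(i <- r | P i) F i).
Proof.
move=> h; elim/big_rec: _ => [|i x Pi hx]; first by rewrite -(scale0r (1 : H)); apply: S_alg.
by apply: S_add => //; apply: h.
Qed.

Lemma S_exp h n : S h -> S (h ^+ n).
Proof.
move=> sh; elim: n => [|n IH]; first by rewrite expr0 -(scale1r (1 : H)); apply: S_alg.
by rewrite exprS; apply: S_mul.
Qed.

Lemma S_adjoin (U : {subfield H}) x : (forall u, u \in U -> S u) -> S x ->
  forall h, h \in <<U; x>>%VS -> S h.
Proof.
move=> hU sx h hin.
rewrite -(Fadjoin_poly_eq hin) horner_coef.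
apply: S_sum => i _; apply: S_mul; last exact: S_exp.
apply: hU; exact: (polyOverP (Fadjoin_polyOver U x h)).
Qed.

End Ext.

Lemma v_prod (L : fieldType) (v : L -> int) (hv : is_prime_val v)
  (I : Type) (r : seq I) (P : pred I) (F : I -> L) :
  (forall i, P i -> F i != 0) ->
  \prod_(i <- r | P i) F i != 0 /\ v (\prod_(i <- r | P i) F i) = \sum_(i <- r | P i) v (F i).
Proof.
move=> hF.
apply: (big_rec2 (fun x y => x != 0 /\ v x = y)).
  by split; [exact: oner_neq0 | exact: v1].
move=> i x y Pi [x0 <-]; split; first by rewrite mulf_neq0 // hF.
by rewrite vM // hF.
Qed.

Lemma le_sum_one (R : numDomainType) (n : nat) (F : 'I_n -> R) i :
  (forall j, 0 <= F j) -> F i <= \sum_j F j.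
Proof. by move=> h; rewrite (bigD1 i) //= lerDl sumr_ge0. Qed.

Lemma aux_Tn (n e : nat) (x : int) : (0 < e)%N -> n%:Z + 1 <= x -> n%:Z + 1 <= e%:Z * x.
Proof.
move=> he hx; have x0 : 0 <= x by lia.
have h1e : 1 <= e%:Z by lia.
have := ler_peMl x0 h1e; lia.
Qed.
Lemma aux_lt (a b : int) : a < b -> a + 1 <= b. Proof. lia. Qed.
Lemma aux_key (a B : int) : `|a| <= B -> B + 1 <= a -> False. Proof. lia. Qed.
Lemma aux_F (T f S lB N n : int) : T = f + S -> S <= lB -> n + 1 <= T -> N + lB <= n -> N <= f.
Proof. lia. Qed.
Lemma aux_G (T lB n : int) : T <= lB -> n + 1 <= T -> lB <= n -> False.
Proof. lia. Qed.

Section Root.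
Variables (K : fieldType) (H : fieldExtType K).
Variables (vp : K -> int) (hvp : is_prime_val vp) (wq : H -> int) (hwq : is_prime_val wq).
Variables (e : nat) (he : (0 < e)%N) (hwe : forall c : K, c != 0 -> wq c%:A = e%:Z * vp c).
Variables (l : nat) (hl : (0 < l)%N) (zeta : K) (hz : l.-primitive_root zeta).
Variables (hl0 : (l%:R : K) != 0) (hvl : vp l%:R = 0).

Lemma algM (a b : K) : (a * b)%:A = a%:A * b%:A :> H.
Proof. by rewrite -scalerAl mul1r scalerA. Qed.

Lemma algX (a : K) i : (a ^+ i)%:A = (a%:A : H) ^+ i.
Proof. by rewrite -in_algE rmorphXn. Qed.

Lemma S_root (y : H) (u : K) : y ^+ l = u%:A -> gev vp (u - 1) 1 -> S wq y.
Proof.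
move=> ey hu N.
set xi : H := zeta%:A.
have hxi : l.-primitive_root xi by rewrite /xi -in_algE fmorph_primitive_root.
have xil : xi ^+ l = 1 := prim_expr_order hxi.
have xi0 : xi != 0 by rewrite (prim_root_eq0 hxi) -lt0n.
have wxi1 : wq xi = 0.
  have := vX hwq l xi0; rewrite xil (v1 hwq) => /esym /eqP.
  by rewrite mulf_eq0 eqz_nat eqn0Ngt hl /= => /eqP.
have wxi : forall i, wq (xi ^+ i) = 0 by move=> i; rewrite vX // wxi1 mulr0.
set D := fun i j : 'I_l => `|wq (xi ^+ i - xi ^+ j)|.
set B := \sum_(i < l) \sum_(j < l) D i j.
have B0 : 0 <= B by apply: sumr_ge0 => i _; apply: sumr_ge0.
have DB : forall i j, D i j <= B.
  move=> i j; apply: (@le_trans _ _ (\sum_(j' < l) D i j')).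
    by apply: le_sum_one => k; rewrite /D normr_ge0.
  apply: le_sum_one => k.
  by apply: sumr_ge0 => k' _; rewrite /D normr_ge0.
set n := absz (`|N| + l%:Z * B).
have [c [s [c0 vc eu hs]]] := newton hvp hl0 hvl hu n.
have hn1 : N + l%:Z * B <= n%:Z by rewrite /n; (timeout 20 lia).
have hn2 : l%:Z * B <= n%:Z by rewrite /n; (timeout 20 lia).
have s1 : gev vp s (vp 1 + 1) by rewrite (v1 hvp); apply: ge_le hs; (timeout 20 lia).
have [s10 vs1] := strict hvp (oner_neq0 K) s1.
rewrite (v1 hvp) in vs1.
have cA0 : c%:A != 0 :> H by rewrite alg_eq0.
set z := y / c%:A.
have ez : z ^+ l = (1 + s)%:A.
  rewrite /z exprMn exprVn ey eu -algX algM; field.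
  by rewrite alg_eq0 expf_neq0.
have z0 : z != 0.
  apply/eqP => z0; move: ez; rewrite z0 expr0n eqn0Ngt hl /= => /esym /eqP.
  by rewrite alg_eq0 (negPf s10).
have wz : wq z = 0.
  have := vX hwq l z0; rewrite ez hwe // vs1 mulr0 => /esym /eqP.
  by rewrite mulf_eq0 eqz_nat eqn0Ngt hl /= => /eqP.
have eprod : \prod_(i < l) (z - xi ^+ i) = s%:A.
  have h := congr1 (fun p => p.[z]) (factor_Xn_sub_1 hxi).
  rewrite /= horner_prod big_mkord in h.
  rewrite (eq_bigr (fun i : 'I_l => ('X - (xi ^+ i)%:P).[z])); last by move=> i _; rewrite hornerXsubC.
  by rewrite h !hornerE ez scalerDl scale1r addrC addKr.
have yz : y = c%:A * z by rewrite /z mulrC divfK.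
have [s0|s0] := eqVneq s 0.
  move: eprod; rewrite s0 scale0r => /eqP /prodf_eq0 [i _].
  rewrite subr_eq0 => /eqP zi.
  exists (c * zeta ^+ i); rewrite yz zi algM algX subrr; exact: ge0.
set F := fun i : 'I_l => z - xi ^+ i.
have F0 : forall i, F i != 0.
  move=> i; have : \prod_(i < l) F i != 0 by rewrite eprod alg_eq0.
  apply: contra => Fi; apply/prodf_eq0; by exists i.
have [_ hT] := @v_prod _ _ hwq _ (index_enum 'I_l) xpredT F (fun i _ => F0 i).
rewrite eprod hwe // in hT.
have vsn : n%:Z + 1 <= vp s by apply: ge_v hs.
have Tn : n%:Z + 1 <= e%:Z * vp s by apply: aux_Tn.
have Fge : forall i, 0 <= wq (F i).
  move=> i; apply: ge_v (F0 i) _; apply: ge_sub => //; apply: gevI.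
    by rewrite wz.
  by rewrite wxi.
have key : forall i j, i != j -> B < wq (F i) -> wq (F j) <= B.
  move=> i j ij hi; rewrite leNgt; apply/negP => hj.
  have hne : xi ^+ j - xi ^+ i != 0.
    rewrite subr_eq0 (eq_prim_root_expr hxi) !modn_small ?ltn_ord //.
    by rewrite eq_sym.
  have hg : gev wq (F i - F j) (B + 1).
    by apply: ge_sub => //; apply: gevI; apply: aux_lt.
  have : F i - F j = xi ^+ j - xi ^+ i by rewrite /F; ring.
  move=> ee; rewrite ee in hg; have := ge_v hne hg.
  have := DB j i; rewrite /D => hD hh.
  exact: aux_key hD hh.
have sB : \sum_(j < l) B = l%:Z * B by rewrite sumr_const card_ord -mulr_natl natz.
case: (boolP [exists i, B < wq (F i)]) => [/existsP [i0 hi0]|/existsPn hno].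
  have hsum : \sum_(j < l | j != i0) wq (F j) <= l%:Z * B.
    rewrite -sB big_mkcond /=; apply: ler_sum => j _.
    case: ifP => ji; last exact: B0.
    by apply: key hi0; rewrite eq_sym ji.
  rewrite (bigD1 i0) //= in hT.
  have hF : N <= wq (F i0) by apply: aux_F hT hsum Tn hn1.
  exists (c * zeta ^+ i0).
  have -> : y - (c * zeta ^+ i0)%:A = c%:A * F i0 by rewrite yz algM algX /F; ring.
  rewrite -(add0r N); apply: (ge_mul hwq); first by apply: (gevA he hwe); rewrite ?lexx //; apply: gevI; rewrite vc.
  exact: gevI.
exfalso.
have : \sum_(j < l) wq (F j) <= \sum_(j < l) B.
  by apply: ler_sum => j _; move: (hno j); rewrite -leNgt.
rewrite sB -hT => hle; exact: aux_G hle Tn hn2.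
Qed.
End Root.

Definition phi (F : finFieldType) (K : fieldExtType (ratfun F)) (c : F) : K :=
  (tofrac (c%:P) : ratfun F)%:A.

Lemma vp_nat (F : finFieldType) (K : fieldExtType (ratfun F)) (vp : K -> int)
  (hvp : is_prime_val vp) n : (n%:R : K) != 0 -> vp n%:R = 0.
Proof.
move=> n0.
have e1 : (n%:R : K) = @phi F K n%:R by rewrite /phi -in_algE !rmorph_nat.
apply: (vfin hvp n0 (finNzRing_gt1 F)).
by rewrite e1 -[in RHS](expf_card (n%:R : F)) /phi -!in_algE !rmorphXn.
Qed.

Lemma aux_e (e : nat) (a : int) : e%:Z * a = 1 -> e = 1%N.
Proof.
move/(congr1 absz); rewrite abszM absz_nat /= => /eqP; rewrite muln_eq1.
by case/andP => /eqP.
Qed.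

Unset Implicit Arguments.
Theorem lemma3p6 (F : finFieldType) (K : fieldExtType (ratfun F)) (l : nat)
  (hl : prime l) (hchar : l \notin [pchar K])
  (hzeta : exists z : K, l.-primitive_root z)
  (x d a : K) (hx : x != 0) (hd : d != 0) (ha : a != 0)
  (hdx : d * x ^+ l + d ^+ l != 0) (haa : a + a^-1 != 0)
  (H : fieldExtType K) (al be ga : H)
  (hal : al ^+ l = (1 + d^-1)%:A)
  (hbe : be ^+ l = (1 + (d * x ^+ l + d ^+ l)^-1)%:A)
  (hga : ga ^+ l = (1 + (a + a^-1) * d^-1)%:A)
  (hgen : (<<1%VS & [:: al; be; ga]>>%VS = fullv))
  (vp : K -> int) (hvp : is_prime_val vp)
  (h1 : vp d < 0)
  (h2 : vp (d * x ^+ l) < vp (d ^+ l))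
  (h3a : vp a = 0) (h3b : ~ residue_lth_power vp l a)
  (h4 : ~~ ((l%:Z) %| vp d)%Z) :
  forall wq : H -> int, is_prime_val wq -> lies_above wq vp ->
    ~~ ((l%:Z) %| wq ((d * x ^+ l + d ^+ l)%:A))%Z /\
    ~ residue_lth_power wq l (a%:A).
Proof.
move=> wq hwq [e [he hwe]].
have hl0 : (0 < l)%N by apply: prime_gt0.
have hlK : (l%:R : K) != 0 by move: hchar; rewrite inE hl.
have hvl : vp l%:R = 0 := vp_nat hvp hlK.
have [zeta hz] := hzeta.
have Sr := S_root hvp hwq he hwe hl0 hz hlK hvl.
have vdi : 1 <= vp d^-1 by rewrite (vV hvp hd); lia.
have dxl0 : d * x ^+ l != 0 by rewrite mulf_neq0 // expf_neq0.
have [_ vD] := strict hvp (x := d * x ^+ l) (y := d ^+ l) dxl0 (gevI (aux_lt h2)).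
set D := d * x ^+ l + d ^+ l in vD hdx hbe *.
have vdl : vp (d ^+ l) = l%:Z * vp d by rewrite (vX hvp) // expf_neq0.
have vDn : 1 <= vp D^-1.
  rewrite (vV hvp hdx) vD.
  have : l%:Z * vp d < 0 by rewrite pmulr_rlt0 // ltz_nat.
  rewrite -vdl; lia.
have Sal : S wq al.
  apply: Sr hal _; apply: gevI; by rewrite addrC addKr.
have Sbe : S wq be.
  apply: Sr hbe _; apply: gevI; by rewrite addrC addKr.
have Sga : S wq ga.
  apply: Sr hga _; rewrite addrC addKr.
  have -> : (1 : int) = 0 + 1 by [].
  apply: ge_mul => //; last exact: gevI.
  apply: ge_add => //; apply: gevI; first by rewrite h3a.
  by rewrite (vV hvp ha) h3a.
have Sall : forall h : H, S wq h.
  move=> h; have : h \in <<1%VS & [:: al; be; ga]>>%VS by rewrite hgen memvf.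
  rewrite !adjoin_cons adjoin_nil agenv_id.
  apply: (S_adjoin hwq he (U := <<<<1%AS; al>>; be>>%AS)); last exact: Sga.
  move=> u1; apply: (S_adjoin hwq he (U := <<1%AS; al>>%AS)); last exact: Sbe.
  move=> u2; apply: (S_adjoin hwq he (U := 1%AS)); last exact: Sal.
  move=> u /vlineP [k ->]; exact: S_alg.
have e1 : e = 1%N.
  have [_ _ [t [t0 wt]]] := hwq.
  have [c hc] := Sall t 2.
  have hy : gev wq (- (t - c%:A)) (wq t + 1) by rewrite wt; apply: ge_opp.
  have [c0 vc] := strict hwq t0 hy.
  rewrite opprB addrC subrK in c0 vc.
  have c0' : c != 0 by move: c0; rewrite alg_eq0.
  by apply: (@aux_e e (vp c)); rewrite -hwe // vc wt.
subst e.
have hwe1 : forall c : K, c != 0 -> wq c%:A = vp c by move=> c c0; rewrite hwe // mul1r.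
split.
  rewrite hwe1 // vD (vM hvp) ?expf_neq0 // (vX hvp) //.
  apply: contra h4 => h.
  have -> : vp d = (vp d + l%:Z * vp x) - l%:Z * vp x by ring.
  by apply: rpredB => //; apply: dvdz_mulr; apply: dvdzz.
move=> [y [y0 wy hy]].
have [c hc] := Sall y 1.
have hy' : gev wq (- (y - c%:A)) (wq y + 1) by rewrite wy; apply: ge_opp.
have [c0 vc] := strict hwq y0 hy'.
rewrite opprB addrC subrK in c0 vc.
have c0' : c != 0 by move: c0; rewrite alg_eq0.
have vc0 : vp c = 0 by rewrite -hwe1 // vc.
apply: h3b; exists c; split => //.
have gA : gev wq (a%:A - y ^+ l) 1.
  case/orP: hy => [/eqP ->|hp]; first exact: ge0.
  exact: gevI (aux_lt hp).
have gB : gev wq (y ^+ l - c%:A ^+ l) 1.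
  rewrite subrXX.
  have gS : gev wq (\sum_(i < l) y ^+ (l.-1 - i) * c%:A ^+ i) 0.
    apply: (ge_sum hwq) => i _.
    have gy : gev wq y 0 by apply: gevI; rewrite wy.
    have gc : gev wq c%:A 0 by apply: gevI; rewrite vc wy.
    by have := ge_mul hwq (ge_exp hwq (l.-1 - i) gy) (ge_exp hwq i gc); rewrite addr0.
  by have := ge_mul hwq hc gS; rewrite addr0.
have gsum := ge_add hwq gA gB.
have ee : a%:A - y ^+ l + (y ^+ l - c%:A ^+ l) = (a - c ^+ l)%:A by rewrite scalerBl algX; ring.
rewrite ee in gsum; move: gsum.
have [->|ne] := eqVneq (a - c ^+ l) 0; first by move=> _.
by rewrite /gev alg_eq0 (negPf ne) /= hwe1 // => h; apply: lt_le_trans h.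
Qed.
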